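(* Let $N\ge 1$, let $a_1,\dots,a_N>0$, $T_1,\dots,T_N\ge 0$ and $P_{\mathrm{tot}}>0$. For $P_i\ge 0$ let $r_i(P_i)=\log_2(1+a_iP_i)$ and $J(\mathbf P)=\sum_{i=1}^N (r_i(P_i)-T_i)^2$. Consider the problem of minimizing $J(\mathbf P)$ subject to $\sum_{i=1}^N P_i\le P_{\mathrm{tot}}$ and $P_i\ge 0$ for all $i$. Define $\bar P_i=(2^{T_i}-1)/a_i$, which is the unique power with $r_i(\bar P_i)=T_i$. Then every optimal solution $\mathbf P^*$ of this problem satisfies $P_i^*\le \bar P_i$ for all $i$. *)

(* Defs.v *)
(* concrete reals R. Vectors indexed by i in {0,...,N-1}
   are represented as functions nat -> R, only values at i < N matter. *)
From Stdlib Require Import Reals Lra.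
Open Scope R_scope.

Definition log2 (x : R) : R := ln x / ln 2.

Definition rate (a p : R) : R := log2 (1 + a * p).

Definition J (N : nat) (a T P : nat -> R) : R :=
  sum_f_R0 (fun i => (rate (a i) (P i) - T i) ^ 2) (N - 1).

Definition feasible (N : nat) (Ptot : R) (P : nat -> R) : Prop :=
  (forall i, (i < N)%nat -> 0 <= P i) /\
  sum_f_R0 P (N - 1) <= Ptot.

Definition optimal (N : nat) (a T : nat -> R) (Ptot : R) (P : nat -> R) : Prop :=
  feasible N Ptot P /\
  forall Q, feasible N Ptot Q -> J N a T P <= J N a T Q.

Definition Pbar (a T : R) : R := (Rpower 2 T - 1) / a.

(* Main.v *)
Require Import Defs.
From Stdlib Require Import Reals.
From Stdlib Require Import Lra Lia Arith.
Open Scope R_scope.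

Lemma sum_upd (f g : nat -> R) (i : nat) :
  (forall j, j <> i -> f j = g j) ->
  forall n, sum_f_R0 g n = sum_f_R0 f n + (if Nat.leb i n then g i - f i else 0).
Proof.
  intros H n; induction n as [|n IH].
  - simpl. destruct i as [|i]; simpl.
    + lra.
    + rewrite (H 0%nat) by lia. lra.
  - simpl. rewrite IH.
    destruct (Nat.leb i n) eqn:E1; destruct (Nat.leb i (S n)) eqn:E2.
    + apply Nat.leb_le in E1. rewrite (H (S n)) by lia. lra.
    + apply Nat.leb_le in E1; apply Nat.leb_gt in E2; lia.
    + apply Nat.leb_gt in E1; apply Nat.leb_le in E2.
      assert (i = S n) by lia. subst. lra.
    + apply Nat.leb_gt in E2. rewrite (H (S n)) by lia. lra.
Qed.

Theorem proposition1 (N : nat) (a T : nat -> R) (Ptot : R) (Pstar : nat -> R) :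
  (1 <= N)%nat ->
  (forall i, (i < N)%nat -> 0 < a i) ->
  (forall i, (i < N)%nat -> 0 <= T i) ->
  0 < Ptot ->
  optimal N a T Ptot Pstar ->
  forall i, (i < N)%nat -> Pstar i <= Pbar (a i) (T i).
Proof.
  intros HN Ha HT HP [[Hnn Hsum] Hopt] i Hi.
  destruct (Rle_dec (Pstar i) (Pbar (a i) (T i))) as [|Hgt]; [assumption|].
  exfalso. apply Rnot_le_lt in Hgt.
  pose proof (Ha i Hi) as ai. pose proof (HT i Hi) as ti.
  assert (ln2 : 0 < ln 2) by (rewrite <- ln_1; apply ln_increasing; lra).
  assert (E2 : 1 <= Rpower 2 (T i)).
  { unfold Rpower. rewrite <- exp_0. destruct (Req_dec (T i) 0).
    - rewrite H, Rmult_0_l. lra.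
    - left. apply exp_increasing. apply Rmult_lt_0_compat; lra. }
  assert (Pb0 : 0 <= Pbar (a i) (T i)).
  { unfold Pbar. apply Rmult_le_pos; [lra|]. left; apply Rinv_0_lt_compat; lra. }
  assert (Hr : rate (a i) (Pbar (a i) (T i)) = T i).
  { unfold rate, log2, Pbar.
    replace (1 + a i * ((Rpower 2 (T i) - 1) / a i)) with (Rpower 2 (T i)) by (field; lra).
    unfold Rpower. rewrite ln_exp. field. lra. }
  assert (Hr2 : T i < rate (a i) (Pstar i)).
  { rewrite <- Hr. unfold rate, log2. unfold Rdiv.
    apply Rmult_lt_compat_r; [apply Rinv_0_lt_compat; lra|].
    apply ln_increasing.
    - assert (0 <= a i * Pbar (a i) (T i)) by (apply Rmult_le_pos; lra). lra.
    - apply Rplus_lt_compat_l. apply Rmult_lt_compat_l; lra. }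
  set (Q := fun j => if Nat.eqb j i then Pbar (a i) (T i) else Pstar j).
  assert (HQ : forall j, j <> i -> Pstar j = Q j).
  { intros j Hj. unfold Q. apply Nat.eqb_neq in Hj. rewrite Hj. reflexivity. }
  assert (Qi : Q i = Pbar (a i) (T i)) by (unfold Q; rewrite Nat.eqb_refl; reflexivity).
  assert (Hle : Nat.leb i (N - 1) = true) by (apply Nat.leb_le; lia).
  assert (Hf : feasible N Ptot Q).
  { split.
    - intros j Hj. destruct (Nat.eq_dec j i) as [->|Hji].
      + rewrite Qi; lra.
      + rewrite <- HQ by assumption. apply Hnn; assumption.
    - rewrite (sum_upd Pstar Q i HQ), Hle, Qi. lra. }
  specialize (Hopt Q Hf). unfold J in Hopt.
  rewrite (sum_upd (fun j => (rate (a j) (Pstar j) - T j) ^ 2)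
                   (fun j => (rate (a j) (Q j) - T j) ^ 2) i) in Hopt.
  - rewrite Hle, Qi, Hr in Hopt.
    assert (0 < (rate (a i) (Pstar i) - T i) ^ 2).
    { apply pow_lt. lra. }
    lra.
  - intros j Hj. simpl. rewrite (HQ j Hj). reflexivity.
Qed.
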